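(* Let $(X,D)$ be a JS-metric space with a partial order $\le$ and let $F:X^2\to X$ have the mixed monotone property and satisfy, for some $k\in[0,1)$, $D(F(x,y),F(u,v))+D(F(y,x),F(v,u))\le k[D(x,u)+D(y,v)]$ for all $x\ge u$, $y\le v$. Let $w$ and $\tilde z$ be coupled fixed points of $F$ that are incomparable in $X^2$, and suppose there exists $z^*\in X^2$ which is an upper bound or a lower bound of both $w$ and $\tilde z$ in $X^2$, with $D_+(w,z^* )<\infty$ and $D_+(\tilde z,z^* )<\infty$. Then $w=\tilde z$.
   Context: Arithmetic is carried out in the extended reals. $(X,D)$ is a JS-metric space: $D:X\times X\to[0,\infty]$ satisfies (D1) $D(x,y)=0\Rightarrow x=y$; (D2) $D(x,y)=D(y,x)$; (D3) there exists $c>0$ such that for all $x,y\in X$ and every sequence $(x_n)$ with $\lim_n D(x_n,x)=0$, $D(x,y)\le c\limsup_n D(x_n,y)$. $D_+((x,y),(u,v))=D(x,u)+D(y,v)$. Partial order on $X^2$: $(u,v)\le(x,y)\iff u\le x$ and $v\ge y$; comparable means one is $\le$ the other. Mixed monotone property: $x_1\le x_2\Rightarrow F(x_1,y)\le F(x_2,y)$ and $y_1\le y_2\Rightarrow F(x,y_1)\ge F(x,y_2)$. A coupled fixed point is $(x,y)$ with $x=F(x,y)$, $y=F(y,x)$. *)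

(* Defs.v *)
From Stdlib Require Import Reals.
Open Scope R_scope.

(* Extended reals [0, +oo] (nonnegativity of D is a separate hypothesis). *)
Inductive ER : Type := Fin (r : R) | Inf.

Definition ER_add (a b : ER) : ER :=
  match a, b with
  | Fin x, Fin y => Fin (x + y)
  | _, _ => Inf
  end.

(* scalar multiplication by a real constant k >= 0, convention 0 * oo = 0 *)
Definition ER_scal (k : R) (a : ER) : ER :=
  match a with
  | Fin x => Fin (k * x)
  | Inf => if Req_EM_T k 0 then Fin 0 else Inf
  end.

Definition ER_le (a b : ER) : Prop :=
  match a, b with
  | Fin x, Fin y => x <= y
  | _, Inf => True
  | Inf, Fin _ => False
  end.

Definition ER_finite (a : ER) : Prop := a <> Inf.

Definition ER_is_lub (S : ER -> Prop) (l : ER) : Prop :=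
  (forall e, S e -> ER_le e l) /\ (forall m, (forall e, S e -> ER_le e m) -> ER_le l m).

Definition ER_is_glb (S : ER -> Prop) (l : ER) : Prop :=
  (forall e, S e -> ER_le l e) /\ (forall m, (forall e, S e -> ER_le m e) -> ER_le m l).

Definition ER_is_limsup (u : nat -> ER) (L : ER) : Prop :=
  exists s : nat -> ER,
    (forall N, ER_is_lub (fun e => exists n, (N <= n)%nat /\ e = u n) (s N)) /\
    ER_is_glb (fun e => exists N, e = s N) L.

Definition ER_tends_to_0 (u : nat -> ER) : Prop :=
  forall eps, 0 < eps -> exists N, forall n, (N <= n)%nat ->
    exists r, u n = Fin r /\ Rabs r < eps.

(* JS-metric (Jleli–Samet) axioms D1–D3, with D : X x X -> [0, oo]. *)
Definition JS_metric {X : Type} (D : X -> X -> ER) : Prop :=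
  (forall x y r, D x y = Fin r -> 0 <= r) /\
  (forall x y, D x y = Fin 0 -> x = y) /\
  (forall x y, D x y = D y x) /\
  (exists c, 0 < c /\
     forall (x y : X) (xs : nat -> X),
       ER_tends_to_0 (fun n => D (xs n) x) ->
       forall L, ER_is_limsup (fun n => D (xs n) y) L ->
       ER_le (D x y) (ER_scal c L)).

Definition partial_order {X : Type} (le : X -> X -> Prop) : Prop :=
  (forall x, le x x) /\
  (forall x y, le x y -> le y x -> x = y) /\
  (forall x y z, le x y -> le y z -> le x z).

Definition le2 {X : Type} (le : X -> X -> Prop) (p q : X * X) : Prop :=
  le (fst p) (fst q) /\ le (snd q) (snd p).

Definition D_plus {X : Type} (D : X -> X -> ER) (p q : X * X) : ER :=
  ER_add (D (fst p) (fst q)) (D (snd p) (snd q)).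

Definition mixed_monotone {X : Type} (le : X -> X -> Prop) (F : X -> X -> X) : Prop :=
  (forall x1 x2 y, le x1 x2 -> le (F x1 y) (F x2 y)) /\
  (forall x y1 y2, le y1 y2 -> le (F x y2) (F x y1)).

Definition coupled_fixed_point {X : Type} (F : X -> X -> X) (p : X * X) : Prop :=
  fst p = F (fst p) (snd p) /\ snd p = F (snd p) (fst p).

(* Main.v *)
Require Import Defs.
From Stdlib Require Import Reals Lra Classical ClassicalEpsilon.
Open Scope R_scope.

Lemma ER_add_fin a b r : ER_add a b = Fin r ->
  exists x y, a = Fin x /\ b = Fin y /\ r = x + y.
Proof.
  destruct a as [x|], b as [y|]; simpl; try discriminate.
  intros H; inversion H; eauto.
Qed.

Lemma lub_exists (u : nat -> ER) (N : nat) :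
  exists s, ER_is_lub (fun e => exists n, (N <= n)%nat /\ e = u n) s.
Proof.
  destruct (classic (exists n, (N <= n)%nat /\ u n = Inf)) as [[n [Hn Hu]]|HI].
  - exists Inf; split.
    + intros e _; destruct e; exact I.
    + intros m Hm. specialize (Hm Inf (ex_intro _ n (conj Hn (eq_sym Hu)))).
      destruct m; simpl in *; tauto.
  - assert (Hf : forall n, (N <= n)%nat -> exists r, u n = Fin r).
    { intros n Hn. destruct (u n) eqn:E; eauto. exfalso; apply HI; eauto. }
    set (E := fun r => exists n, (N <= n)%nat /\ u n = Fin r).
    destruct (classic (bound E)) as [Hb|Hnb].
    + destruct (Hf N (Nat.le_refl N)) as [r0 Hr0].
      destruct (completeness E Hb (ex_intro _ r0 (ex_intro _ N (conj (Nat.le_refl N) Hr0)))) as [l [Hl1 Hl2]].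
      exists (Fin l); split.
      * intros e [n [Hn ->]]. destruct (Hf n Hn) as [r Hr]. rewrite Hr; simpl.
        apply Hl1. exists n; auto.
      * intros m Hm. destruct m as [a|]; simpl; auto.
        apply Hl2. intros r [n [Hn Hr]]. specialize (Hm (u n) (ex_intro _ n (conj Hn eq_refl))).
        rewrite Hr in Hm; exact Hm.
    + exists Inf; split.
      * intros e _; destruct e; exact I.
      * intros m Hm. destruct m as [a|]; simpl; auto.
        apply Hnb. exists a. intros r [n [Hn Hr]].
        specialize (Hm (u n) (ex_intro _ n (conj Hn eq_refl))). rewrite Hr in Hm; exact Hm.
Qed.

Lemma limsup_zero (u : nat -> ER) :
  (forall n r, u n = Fin r -> 0 <= r) ->
  ER_tends_to_0 u -> ER_is_limsup u (Fin 0).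
Proof.
  intros Hnn Ht.
  assert (Hs : forall N, {s | ER_is_lub (fun e => exists n, (N <= n)%nat /\ e = u n) s}).
  { intros N. apply constructive_indefinite_description. apply lub_exists. }
  exists (fun N => proj1_sig (Hs N)). split.
  - intros N. exact (proj2_sig (Hs N)).
  - assert (Hsmall : forall eps, 0 < eps -> exists N, ER_le (proj1_sig (Hs N)) (Fin eps)).
    { intros eps He. destruct (Ht eps He) as [N HN]. exists N.
      destruct (proj2_sig (Hs N)) as [_ H2]. apply H2.
      intros e [n [Hn ->]]. destruct (HN n Hn) as [r [Hr Ha]]. rewrite Hr; simpl.
      apply Rabs_def2 in Ha. lra. }
    split.
    + intros e [N ->]. destruct (proj2_sig (Hs N)) as [H1 _].
      specialize (H1 (u N) (ex_intro _ N (conj (Nat.le_refl N) eq_refl))).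
      destruct (proj1_sig (Hs N)); simpl; auto.
      destruct (u N) eqn:E; simpl in H1; [|contradiction].
      specialize (Hnn N r0 E). lra.
    + intros m Hm. destruct m as [a|].
      * simpl. apply Rnot_lt_le; intro Ha.
        destruct (Hsmall (a/2)) as [N HN]; [lra|].
        specialize (Hm _ (ex_intro _ N eq_refl)).
        destruct (proj1_sig (Hs N)); simpl in *; [lra|contradiction].
      * destruct (Hsmall 1) as [N HN]; [lra|].
        specialize (Hm _ (ex_intro _ N eq_refl)).
        destruct (proj1_sig (Hs N)); simpl in *; contradiction.
Qed.

Lemma conv_lemma (X : Type) (D : X -> X -> ER) (k : R) (w : X * X) (p : nat -> X * X) :
  (forall x y r, D x y = Fin r -> 0 <= r) ->
  0 <= k < 1 ->
  (forall n, ER_le (D_plus D (p (S n)) w) (ER_scal k (D_plus D (p n) w))) ->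
  ER_finite (D_plus D (p 0%nat) w) ->
  ER_tends_to_0 (fun n => D (fst (p n)) (fst w)) /\
  ER_tends_to_0 (fun n => D (snd (p n)) (snd w)).
Proof.
  intros Hnn Hk Hstep Hfin.
  destruct (D_plus D (p 0%nat) w) as [r0|] eqn:E0; [|congruence].
  assert (Hr0 : 0 <= r0).
  { destruct (ER_add_fin _ _ _ E0) as [a [b [Ha [Hb ->]]]].
    apply Hnn in Ha; apply Hnn in Hb; lra. }
  assert (Hind : forall n, exists r, D_plus D (p n) w = Fin r /\ r <= k ^ n * r0).
  { induction n as [|n [r [Hr Hle]]].
    - exists r0; split; auto. simpl; lra.
    - specialize (Hstep n). rewrite Hr in Hstep. simpl in Hstep.
      destruct (D_plus D (p (S n)) w) as [r'|]; [|contradiction].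
      exists r'; split; [reflexivity|]. simpl.
      assert (k * r <= k * (k ^ n * r0)) by (apply Rmult_le_compat_l; lra). simpl in Hstep. lra. }
  assert (Hgen : forall eps, 0 < eps -> exists N, forall n, (N <= n)%nat ->
     exists a b, D (fst (p n)) (fst w) = Fin a /\ D (snd (p n)) (snd w) = Fin b /\
       0 <= a /\ 0 <= b /\ a + b < eps).
  { intros eps He.
    assert (Habs : Rabs k < 1) by (rewrite Rabs_right; lra).
    destruct (pow_lt_1_zero k Habs (eps / (r0 + 1))) as [N HN].
    { apply Rdiv_lt_0_compat; lra. }
    exists N. intros n Hn.
    destruct (Hind n) as [r [Hr Hle]].
    destruct (ER_add_fin _ _ _ Hr) as [a [b [Ha [Hb Hab]]]].
    pose proof (Hnn _ _ _ Ha). pose proof (Hnn _ _ _ Hb).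
    exists a, b. split; [exact Ha|]. split; [exact Hb|]. split; [lra|]. split; [lra|].
    specialize (HN n Hn). rewrite Rabs_right in HN.
    2:{ apply Rle_ge, pow_le; lra. }
    assert (Hkn : 0 <= k ^ n) by (apply pow_le; lra).
    assert (k ^ n * (r0 + 1) < eps).
    { apply (Rmult_lt_compat_r (r0+1)) in HN; [|lra].
      unfold Rdiv in HN. rewrite Rmult_assoc, Rinv_l in HN by lra. lra. }
    nra. }
  split; intros eps He; destruct (Hgen eps He) as [N HN]; exists N; intros n Hn;
    destruct (HN n Hn) as [a [b [Ha [Hb [Ha0 [Hb0 Hs]]]]]].
  - exists a; split; auto. rewrite Rabs_right; lra.
  - exists b; split; auto. rewrite Rabs_right; lra.
Qed.

Lemma eq_from_lim (X : Type) (D : X -> X -> ER) (a b : X) (xs : nat -> X) :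
  JS_metric D ->
  ER_tends_to_0 (fun n => D (xs n) a) ->
  ER_tends_to_0 (fun n => D (xs n) b) -> a = b.
Proof.
  intros [Hnn [H0 [Hsym [c [Hc H3]]]]] Ha Hb.
  pose proof (H3 a b xs Ha (Fin 0) (limsup_zero _ (fun n r H => Hnn _ _ r H) Hb)) as H.
  simpl in H. destruct (D a b) as [r|] eqn:E; [|contradiction].
  apply H0. rewrite E. apply Hnn in E. simpl in H. f_equal. nra.
Qed.

Theorem mainTheorem13 (X : Type) (D : X -> X -> ER) (le : X -> X -> Prop)
  (F : X -> X -> X) (k : R) (w z zs : X * X) :
  JS_metric D ->
  partial_order le ->
  mixed_monotone le F ->
  0 <= k < 1 ->
  (forall x y u v, le u x -> le y v ->
     ER_le (ER_add (D (F x y) (F u v)) (D (F y x) (F v u)))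
           (ER_scal k (ER_add (D x u) (D y v)))) ->
  coupled_fixed_point F w ->
  coupled_fixed_point F z ->
  ~ le2 le w z -> ~ le2 le z w ->
  ((le2 le w zs /\ le2 le z zs) \/ (le2 le zs w /\ le2 le zs z)) ->
  ER_finite (D_plus D w zs) ->
  ER_finite (D_plus D z zs) ->
  w = z.
Proof.
  intros HJS [Hrefl [Hanti Htr]] [Hm1 Hm2] Hk Hc Hw Hz _ _ Hb Hfw Hfz.
  pose proof HJS as [Hnn [_ [Hsym _]]].
  set (T := fun q : X * X => (F (fst q) (snd q), F (snd q) (fst q))).
  set (p := fun n => Nat.iter n T zs).
  assert (HpS : forall n, p (S n) = T (p n)) by reflexivity.
  assert (Hsw : forall q, D_plus D q zs = D_plus D zs q).
  { intros q. unfold D_plus. rewrite (Hsym (fst q)), (Hsym (snd q)). reflexivity. }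
  assert (Key : forall v : X * X, coupled_fixed_point F v ->
     (le2 le v zs \/ le2 le zs v) -> ER_finite (D_plus D v zs) ->
     ER_tends_to_0 (fun n => D (fst (p n)) (fst v)) /\
     ER_tends_to_0 (fun n => D (snd (p n)) (snd v))).
  { intros [v1 v2] [Hv1 Hv2] Hord Hfin. simpl in Hv1, Hv2.
    apply (conv_lemma X D k (v1, v2) p Hnn Hk); [|simpl; rewrite <- Hsw; exact Hfin].
    destruct Hord as [Hup|Hlo].
    - assert (Hinv : forall n, le2 le (v1, v2) (p n)).
      { induction n as [|n [IH1 IH2]]; [exact Hup|].
        rewrite HpS. unfold T, le2 in *; simpl in *. split.
        + apply Htr with (F v1 v2); [rewrite <- Hv1; apply Hrefl|]. apply Htr with (F (fst (p n)) v2); [apply Hm1|apply Hm2]; assumption.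
        + apply Htr with (F v2 v1); [apply Htr with (F v2 (fst (p n))); [apply Hm1|apply Hm2]; assumption|rewrite <- Hv2; apply Hrefl]. }
      intros n. destruct (Hinv n) as [I1 I2]. simpl in I1, I2.
      rewrite HpS. unfold D_plus, T; simpl.
      pose proof (Hc (fst (p n)) (snd (p n)) v1 v2 I1 I2) as H.
      rewrite <- Hv1, <- Hv2 in H. exact H.
    - assert (Hinv : forall n, le2 le (p n) (v1, v2)).
      { induction n as [|n [IH1 IH2]]; [exact Hlo|].
        rewrite HpS. unfold T, le2 in *; simpl in *. split.
        + apply Htr with (F v1 v2); [apply Htr with (F v1 (snd (p n))); [apply Hm1|apply Hm2]; assumption|rewrite <- Hv1; apply Hrefl].
        + apply Htr with (F v2 v1); [rewrite <- Hv2; apply Hrefl|]. apply Htr with (F (snd (p n)) v1); [apply Hm1|apply Hm2]; assumption. }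
      intros n. destruct (Hinv n) as [I1 I2]. simpl in I1, I2.
      rewrite HpS. unfold D_plus, T; simpl.
      pose proof (Hc v1 v2 (fst (p n)) (snd (p n)) I1 I2) as H.
      rewrite <- Hv1, <- Hv2 in H.
      rewrite (Hsym (F _ _) v1), (Hsym (F _ _) v2), (Hsym (fst _) v1), (Hsym (snd _) v2).
      exact H. }
  assert (Ow : le2 le w zs \/ le2 le zs w) by tauto.
  assert (Oz : le2 le z zs \/ le2 le zs z) by tauto.
  destruct (Key w Hw Ow Hfw) as [W1 W2].
  destruct (Key z Hz Oz Hfz) as [Z1 Z2].
  destruct w as [w1 w2], z as [z1 z2]; simpl in *.
  f_equal; [exact (eq_from_lim X D _ _ (fun n => fst (p n)) HJS W1 Z1)|exact (eq_from_lim X D _ _ (fun n => snd (p n)) HJS W2 Z2)].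
Qed.
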